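(* Let $m=1$, let $\boldsymbol{S}\in\mathrm{Mat}(M,M,\mathbb{C})$ be invertible, $\boldsymbol{U}\in\mathrm{Mat}(1,M,\mathbb{C})$, $\boldsymbol{V}\in\mathrm{Mat}(M,1,\mathbb{C})$, $\boldsymbol{K}$ a solution of $\boldsymbol{S}\boldsymbol{K}+\boldsymbol{K}\boldsymbol{S}=\boldsymbol{V}\boldsymbol{U}$, $\boldsymbol{\Xi}=e^{-\boldsymbol{S}x-\boldsymbol{S}^{-1}y}$, $p_0\in\mathbb{C}$, and let $q,p$ be the scalar functions $$q=\boldsymbol{U}\boldsymbol{\Xi}\,(\boldsymbol{I}_M+(\boldsymbol{K}\boldsymbol{\Xi})^2)^{-1}\boldsymbol{V},\qquad p=p_0-\boldsymbol{U}\boldsymbol{\Xi}\boldsymbol{K}\boldsymbol{\Xi}\,(\boldsymbol{I}_M+(\boldsymbol{K}\boldsymbol{\Xi})^2)^{-1}\boldsymbol{V}.$$ Then, with $D:=\det(\boldsymbol{I}_M+(\boldsymbol{K}\boldsymbol{\Xi})^2)$, on any open set where $D\neq0$, $$p=p_0+\frac{D_x}{D}\quad(\text{i.e. } p=p_0+(\log D)_x),\qquad q=2\,\mathrm{tr}\big(\boldsymbol{S}\boldsymbol{K}\boldsymbol{\Xi}\,(\boldsymbol{I}_M+(\boldsymbol{K}\boldsymbol{\Xi})^2)^{-1}\big).$$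
   Context: $\boldsymbol{I}_M$ is the $M\times M$ identity matrix; $e^{(\cdot)}$ is the matrix exponential; $x,y$ are real variables and subscripts denote partial derivatives. *)

(* Defs.v *)
From HB Require Import structures.
From Stdlib Require Import Reals Lra ClassicalEpsilon FunctionalExtensionality.
From mathcomp Require Import all_boot all_algebra.

Set Implicit Arguments.
Unset Strict Implicit.
Unset Printing Implicit Defensive.

Record cplx := Cplx { re : Rdefinitions.R ; im : Rdefinitions.R }.

Definition cplx_eqb (z w : cplx) : bool :=
  if Req_EM_T (re z) (re w) then (if Req_EM_T (im z) (im w) then true else false) else false.

Lemma cplx_eqP : Equality.axiom cplx_eqb.
Proof.
move=> [a b] [c d]; rewrite /cplx_eqb /=.
case: (Req_EM_T a c) => [ha|h]; last by constructor => -[].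
case: (Req_EM_T b d) => [hb|h]; last by constructor => -[].
by constructor; rewrite ha hb.
Qed.
HB.instance Definition _ := hasDecEq.Build cplx cplx_eqP.

Definition cplx_find (P : pred cplx) (n : nat) : option cplx :=
  match excluded_middle_informative (exists x, P x) with
  | left h => Some (proj1_sig (constructive_indefinite_description _ h))
  | right _ => None
  end.

Lemma cplx_find_correct P n x : cplx_find P n = Some x -> P x.
Proof.
rewrite /cplx_find; case: excluded_middle_informative => // h [<-].
exact: proj2_sig (constructive_indefinite_description _ h).
Qed.

Lemma cplx_find_complete (P : pred cplx) : (exists x, P x) -> exists n, cplx_find P n.
Proof. by move=> h; exists 0%N; rewrite /cplx_find; case: excluded_middle_informative. Qed.

Lemma cplx_find_ext (P Q : pred cplx) : P =1 Q -> cplx_find P =1 cplx_find Q.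
Proof. by move=> h; have -> : P = Q by apply: functional_extensionality. Qed.

HB.instance Definition _ := hasChoice.Build cplx
  cplx_find_correct cplx_find_complete cplx_find_ext.

Definition cadd (z w : cplx) := Cplx (Rplus (re z) (re w)) (Rplus (im z) (im w)).
Definition copp (z : cplx) := Cplx (Ropp (re z)) (Ropp (im z)).
Definition czero := Cplx R0 R0.
Definition cone := Cplx R1 R0.
Definition cmul (z w : cplx) :=
  Cplx (Rminus (Rmult (re z) (re w)) (Rmult (im z) (im w)))
       (Rplus (Rmult (re z) (im w)) (Rmult (im z) (re w))).
Definition cnorm2 (z : cplx) := Rplus (Rmult (re z) (re z)) (Rmult (im z) (im z)).
Definition cinv (z : cplx) :=
  Cplx (Rdiv (re z) (cnorm2 z)) (Ropp (Rdiv (im z) (cnorm2 z))).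

Lemma cplx_ext a b c d : a = c -> b = d -> Cplx a b = Cplx c d.
Proof. by move=> -> ->. Qed.

Lemma caddA : associative cadd.
Proof. move=> [a b] [c d] [e f]; apply: cplx_ext => /=; ring. Qed.
Lemma caddC : commutative cadd.
Proof. move=> [a b] [c d]; apply: cplx_ext => /=; ring. Qed.
Lemma cadd0 : left_id czero cadd.
Proof. move=> [a b]; apply: cplx_ext => /=; ring. Qed.
Lemma caddN : left_inverse czero copp cadd.
Proof. move=> [a b]; apply: cplx_ext => /=; ring. Qed.

HB.instance Definition _ := GRing.isZmodule.Build cplx caddA caddC cadd0 caddN.

Lemma cmulA : associative cmul.
Proof. move=> [a b] [c d] [e f]; apply: cplx_ext => /=; ring. Qed.
Lemma cmulC : commutative cmul.
Proof. move=> [a b] [c d]; apply: cplx_ext => /=; ring. Qed.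
Lemma cmul1 : left_id cone cmul.
Proof. move=> [a b]; apply: cplx_ext => /=; ring. Qed.
Lemma cmulDl : left_distributive cmul cadd.
Proof. move=> [a b] [c d] [e f]; apply: cplx_ext => /=; ring. Qed.
Lemma cone_neq0 : cone != czero.
Proof.
apply/eqP => -[] h; by apply: R1_neq_R0.
Qed.

HB.instance Definition _ :=
  GRing.Zmodule_isComNzRing.Build cplx cmulA cmulC cmul1 cmulDl cone_neq0.

Lemma cmulV (z : cplx) : z != 0%R -> GRing.mul (cinv z) z = 1%R.
Proof.
case: z => a b nz.
have hn : Rplus (Rmult a a) (Rmult b b) <> R0.
  move=> h; move/eqP: nz; apply.
  have ha : a = R0 by nra.
  have hb : b = R0 by nra.
  by rewrite ha hb.
apply: cplx_ext; rewrite /= /cnorm2 /=; field; exact: hn.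
Qed.
Lemma cinv0 : cinv 0%R = 0%R.
Proof. apply: cplx_ext; rewrite /= /cnorm2 /Rdiv /=; ring. Qed.

HB.instance Definition _ := GRing.ComNzRing_isField.Build cplx cmulV cinv0.

Definition RtoC (r : Rdefinitions.R) : cplx := Cplx r R0.
Definition cabs (z : cplx) : Rdefinitions.R := sqrt (cnorm2 z).

Local Open Scope ring_scope.

Definition mxpow (M : nat) (A : 'M[cplx]_M) (k : nat) : 'M[cplx]_M :=
  iter k (mulmx A) 1%:M.

Definition mx_lim (m n : nat) (s : nat -> 'M[cplx]_(m, n)) (L : 'M[cplx]_(m, n)) :=
  forall i j (eps : Rdefinitions.R), Rlt R0 eps ->
    exists N : nat, forall k : nat, (N <= k)%N -> Rlt (cabs (s k i j - L i j)) eps.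

Definition is_mexp (M : nat) (A E : 'M[cplx]_M) :=
  mx_lim (fun N => \sum_(k < N) ((k`!)%:R)^-1 *: mxpow A k) E.

Definition mexp (M : nat) (A : 'M[cplx]_M) : 'M[cplx]_M :=
  match excluded_middle_informative (exists E, is_mexp A E) with
  | left h => proj1_sig (constructive_indefinite_description _ h)
  | right _ => 0
  end.

Definition has_pderiv_x (f : Rdefinitions.R -> Rdefinitions.R -> cplx)
  (x y : Rdefinitions.R) (L : cplx) :=
  forall eps : Rdefinitions.R, Rlt R0 eps -> exists delta : Rdefinitions.R, Rlt R0 delta /\
    forall h : Rdefinitions.R, h <> R0 -> Rlt (Rabs h) delta ->
      Rlt (cabs (RtoC (Rinv h) * (f (Rplus x h) y - f x y) - L)) eps.

Definition Xi (M : nat) (S : 'M[cplx]_M) (x y : Rdefinitions.R) : 'M[cplx]_M :=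
  mexp (- (RtoC x *: S + RtoC y *: invmx S)).

Definition Amat (M : nat) (S K : 'M[cplx]_M) (x y : Rdefinitions.R) : 'M[cplx]_M :=
  1%:M + (K *m Xi S x y) *m (K *m Xi S x y).

Definition Dfun (M : nat) (S K : 'M[cplx]_M) (x y : Rdefinitions.R) : cplx :=
  \det (Amat S K x y).

Definition qfun (M : nat) (S K : 'M[cplx]_M) (U : 'M[cplx]_(1, M)) (V : 'M[cplx]_(M, 1))
  (x y : Rdefinitions.R) : cplx :=
  (U *m Xi S x y *m invmx (Amat S K x y) *m V) ord0 ord0.

Definition pfun (M : nat) (S K : 'M[cplx]_M) (U : 'M[cplx]_(1, M)) (V : 'M[cplx]_(M, 1))
  (p0 : cplx) (x y : Rdefinitions.R) : cplx :=
  p0 - (U *m Xi S x y *m K *m Xi S x y *m invmx (Amat S K x y) *m V) ord0 ord0.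

(* Main.v *)
Require Import Defs.
From HB Require Import structures.
From Stdlib Require Import Reals Lra Psatz ClassicalEpsilon Factorial.
From mathcomp Require Import all_boot all_algebra all_fingroup.
Set Implicit Arguments.
Unset Strict Implicit.
Import GRing.Theory.
Local Open Scope ring_scope.
Delimit Scope R_scope with Re.

Definition cb (z : cplx) : R := (Rabs (re z) + Rabs (im z))%Re.

Lemma cb_ge0 z : (0 <= cb z)%Re.
Proof. rewrite /cb; pose proof (Rabs_pos (re z)); pose proof (Rabs_pos (im z)); lra. Qed.

Lemma cb_add z w : (cb (z + w)%R <= cb z + cb w)%Re.
Proof.
case: z => a b; case: w => c d; rewrite /cb /=.
pose proof (Rabs_triang a c); pose proof (Rabs_triang b d); lra.
Qed.

Lemma cb_opp z : cb (- z)%R = cb z.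
Proof. case: z => a b; rewrite /cb /= !Rabs_Ropp //. Qed.

Lemma cb_sub z w : (cb (z - w)%R <= cb z + cb w)%Re.
Proof. by have := cb_add z (- w); rewrite cb_opp. Qed.

Lemma cb_subC z w : cb (z - w)%R = cb (w - z)%R.
Proof. by rewrite -opprB cb_opp. Qed.

Lemma cb_mul z w : (cb (z * w)%R <= cb z * cb w)%Re.
Proof.
case: z => a b; case: w => c d; rewrite /cb /=.
have h1 : (Rabs (a * c - b * d) <= Rabs a * Rabs c + Rabs b * Rabs d)%Re.
  unfold Rminus; eapply Rle_trans; first exact: Rabs_triang.
  by rewrite Rabs_Ropp !Rabs_mult; lra.
have h2 : (Rabs (a * d + b * c) <= Rabs a * Rabs d + Rabs b * Rabs c)%Re.
  eapply Rle_trans; first exact: Rabs_triang.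
  by rewrite !Rabs_mult; lra.
nra.
Qed.

Lemma cb0 : cb 0 = 0%Re.
Proof. rewrite /cb /= Rabs_R0; lra. Qed.

Lemma cb1 : cb 1 = 1%Re.
Proof. rewrite /cb /= Rabs_R0 Rabs_R1; lra. Qed.

Lemma cb_RtoC r : cb (RtoC r) = Rabs r.
Proof. rewrite /cb /= Rabs_R0; lra. Qed.

Lemma cb_RtoCmul r z : cb (RtoC r * z)%R = (Rabs r * cb z)%Re.
Proof.
case: z => a b; rewrite /cb /=.
have -> : (r * a - 0 * b = r * a)%Re by ring.
have -> : (r * b + 0 * a = r * b)%Re by ring.
rewrite !Rabs_mult; ring.
Qed.

Lemma cb_eq0 z : cb z = 0%Re -> z = 0.
Proof.
case: z => a b; rewrite /cb /= => h.
pose proof (Rabs_pos a); pose proof (Rabs_pos b).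
have ha : Rabs a = 0%Re by lra.
have hb : Rabs b = 0%Re by lra.
apply: cplx_ext.
  by case: (Rcase_abs a) ha => h0; [rewrite Rabs_left //; lra | rewrite Rabs_right //; lra].
by case: (Rcase_abs b) hb => h0; [rewrite Rabs_left //; lra | rewrite Rabs_right //; lra].
Qed.

Lemma cabs_cb z : (cabs z <= cb z)%Re.
Proof.
case: z => a b; rewrite /cabs /cb /cnorm2 /=.
rewrite -(sqrt_Rsqr (Rabs a + Rabs b)); last by pose proof (Rabs_pos a); pose proof (Rabs_pos b); lra.
rewrite /Rsqr; pose proof (Rabs_pos a); pose proof (Rabs_pos b).
have e1 : (a * a = Rabs a * Rabs a)%Re by rewrite -Rabs_mult Rabs_right; nra.
have e2 : (b * b = Rabs b * Rabs b)%Re by rewrite -Rabs_mult Rabs_right; nra.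
apply: sqrt_le_1; nra.
Qed.

Lemma cb_cabs z : (cb z <= 2 * cabs z)%Re.
Proof.
case: z => a b; rewrite /cabs /cb /cnorm2 /=.
have ha : (Rabs a <= sqrt (a * a + b * b))%Re.
  rewrite -sqrt_Rsqr_abs; apply: sqrt_le_1; rewrite /Rsqr; nra.
have hb : (Rabs b <= sqrt (a * a + b * b))%Re.
  rewrite -sqrt_Rsqr_abs; apply: sqrt_le_1; rewrite /Rsqr; nra.
lra.
Qed.

Lemma RtoC_add a b : RtoC (a + b)%Re = RtoC a + RtoC b.
Proof. apply: cplx_ext => /=; ring. Qed.
Lemma RtoC_mul a b : RtoC (a * b)%Re = RtoC a * RtoC b.
Proof. apply: cplx_ext => /=; ring. Qed.
Lemma RtoC1 : RtoC 1%Re = 1.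
Proof. by []. Qed.

Lemma natC k : (k%:R : cplx) = RtoC (INR k).
Proof.
elim: k => [|k IH]; first by apply: cplx_ext.
rewrite mulrS IH S_INR RtoC_add addrC; congr (_ + _).
Qed.

Lemma RtoC_inv r : (r <> 0)%Re -> RtoC (/ r)%Re = (RtoC r)^-1.
Proof.
move=> hr; apply: (@mulIf _ (RtoC r)).
  by apply/eqP => -[]. 
rewrite mulVf; last by apply/eqP => -[].
rewrite -RtoC_mul Rinv_l //.
Qed.

Lemma cb_sum_seq (T : Type) (s : seq T) (F : T -> cplx) r :
  (forall i, cb (F i) <= r)%Re -> (cb (\sum_(i <- s) F i) <= INR (size s) * r)%Re.
Proof.
move=> hF; elim: s => [|x s IH]; first by rewrite big_nil cb0 /=; lra.
rewrite big_cons; simpl size.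
have -> : INR (size s).+1 = (INR (size s) + 1)%Re by exact: S_INR.
eapply Rle_trans; first exact: cb_add.
have h1 := hF x. rewrite Rmult_plus_distr_r Rmult_1_l Rplus_comm. apply: Rplus_le_compat => //.
Qed.

Lemma cb_sum_ord k (F : 'I_k -> cplx) r :
  (forall i, cb (F i) <= r)%Re -> (cb (\sum_(i < k) F i) <= INR k * r)%Re.
Proof.
move=> hF; have := @cb_sum_seq _ (index_enum 'I_k) _ _ hF.
suff -> : size (index_enum 'I_k) = k by [].
by rewrite /index_enum; unlock; rewrite -enumT -cardT card_ord.
Qed.

Definition bnd m n (A : 'M[cplx]_(m, n)) (r : R) := forall i j, (cb (A i j) <= r)%Re.

Lemma bnd_le m n (A : 'M[cplx]_(m, n)) r r' : (r <= r')%Re -> bnd A r -> bnd A r'.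
Proof. move=> h hA i j; have := hA i j; lra. Qed.

Lemma bnd_add m n (A B : 'M[cplx]_(m, n)) r s : bnd A r -> bnd B s -> bnd (A + B) (r + s)%Re.
Proof. move=> hA hB i j; rewrite mxE; eapply Rle_trans; first exact: cb_add. exact: Rplus_le_compat. Qed.

Lemma bnd_opp m n (A : 'M[cplx]_(m, n)) r : bnd A r -> bnd (- A) r.
Proof. by move=> hA i j; rewrite mxE cb_opp. Qed.

Lemma bnd_sub m n (A B : 'M[cplx]_(m, n)) r s : bnd A r -> bnd B s -> bnd (A - B) (r + s)%Re.
Proof. by move=> hA hB; apply: bnd_add => //; apply: bnd_opp. Qed.

Lemma bnd_scale m n (A : 'M[cplx]_(m, n)) c r : (0 <= r)%Re -> bnd A r -> bnd (c *: A) (cb c * r)%Re.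
Proof.
move=> r0 hA i j; rewrite mxE; eapply Rle_trans; first exact: cb_mul.
apply: Rmult_le_compat_l; [exact: cb_ge0| exact: hA].
Qed.

Lemma bnd0 m n : bnd (0 : 'M[cplx]_(m, n)) 0%Re.
Proof. by move=> i j; rewrite mxE cb0; lra. Qed.

Lemma bnd1 m : bnd (1%:M : 'M[cplx]_m) 1%Re.
Proof. move=> i j; rewrite mxE; case: (i == j) => /=; [rewrite cb1|rewrite cb0]; lra. Qed.

Lemma bnd_mul m n p (A : 'M[cplx]_(m, n)) (B : 'M[cplx]_(n, p)) r s :
  (0 <= r)%Re -> (0 <= s)%Re -> bnd A r -> bnd B s -> bnd (A *m B) (INR n * (r * s))%Re.
Proof.
move=> r0 s0 hA hB i j; rewrite mxE; apply: cb_sum_ord => k.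
eapply Rle_trans; first exact: cb_mul.
apply: Rmult_le_compat; [exact: cb_ge0|exact: cb_ge0|exact: hA|exact: hB].
Qed.

Lemma bigmax_ge (T : eqType) (s : seq T) (f : T -> R) x :
  x \in s -> (f x <= \big[Rmax/0%Re]_(y <- s) f y)%Re.
Proof.
elim: s => [//|y s IH]; rewrite in_cons big_cons => /orP [/eqP ->|h].
  exact: Rmax_l.
eapply Rle_trans; [exact: IH|exact: Rmax_r].
Qed.

Lemma bnd_exists m n (A : 'M[cplx]_(m, n)) : exists r, (0 <= r)%Re /\ bnd A r.
Proof.
exists (Rmax 0 (\big[Rmax/0%Re]_(i <- index_enum 'I_m)
                  \big[Rmax/0%Re]_(j <- index_enum 'I_n) cb (A i j))).
split; first exact: Rmax_l.
move=> i j; eapply Rle_trans; last exact: Rmax_r.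
pose g := fun i => \big[Rmax/0%Re]_(j <- index_enum 'I_n) cb (A i j).
apply: (@Rle_trans _ (g i)).
  exact: (@bigmax_ge _ _ (fun j => cb (A i j)) j (mem_index_enum j)).
exact: (@bigmax_ge _ _ g i (mem_index_enum i)).
Qed.

Lemma mxpowS m (A : 'M[cplx]_m) k : mxpow A k.+1 = A *m mxpow A k.
Proof. by []. Qed.
Lemma mxpow0 m (A : 'M[cplx]_m) : mxpow A 0 = 1%:M.
Proof. by []. Qed.

Lemma bnd_pow m (A : 'M[cplx]_m) r k : (0 <= r)%Re -> bnd A r -> bnd (mxpow A k) ((INR m * r) ^ k)%Re.
Proof.
move=> r0 hA; elim: k => [|k IH]; first by rewrite mxpow0 /=; exact: bnd1.
have h0 : (0 <= INR m * r)%Re by apply: Rmult_le_pos => //; exact: pos_INR.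
rewrite mxpowS; eapply bnd_le; last first.
  by apply: bnd_mul; [exact: r0|exact: (pow_le _ _ h0)|exact: hA|exact: IH].
by right; rewrite /=; ring.
Qed.

Lemma pow_comm m (S B : 'M[cplx]_m) k : S *m B = B *m S -> S *m mxpow B k = mxpow B k *m S.
Proof.
move=> h; elim: k => [|k IH]; first by rewrite mxpow0 mulmx1 mul1mx.
by rewrite mxpowS mulmxA h -mulmxA IH mulmxA.
Qed.

Fixpoint ex (a : R) (N : nat) : R :=
  match N with 0%N => 0%Re | S N' => (ex a N' + a ^ N' / INR (fact N'))%Re end.

Lemma term_ge0 a k : (0 <= a)%Re -> (0 <= a ^ k / INR (fact k))%Re.
Proof.
move=> ha; apply: Rmult_le_pos; first exact: pow_le.
left; apply: Rinv_0_lt_compat; exact: INR_fact_lt_0.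
Qed.

Lemma ex_E1 a N : ex a (S N) = E1 a N.
Proof.
elim: N => [|N IH]; first by rewrite /E1 /= /Rdiv; ring.
change (ex a (S (S N))) with (ex a (S N) + a ^ (S N) / INR (fact (S N)))%Re.
rewrite IH /E1 tech5 /Rdiv; ring.
Qed.

Lemma ex_le_exp a N : (0 <= a)%Re -> (ex a N <= exp a)%Re.
Proof.
move=> ha; case: N => [|N]; first by left; exact: exp_pos.
rewrite ex_E1; apply: growing_ineq; last exact: E1_cvg.
move=> n; rewrite -!ex_E1.
change (ex a (S (S n))) with (ex a (S n) + a ^ (S n) / INR (fact (S n)))%Re.
have := term_ge0 (S n) ha; lra.
Qed.

Lemma ex_cauchy a : forall eps, (0 < eps)%Re -> exists N, forall n m, (N <= n)%N -> (n <= m)%N ->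
  (ex a m - ex a n < eps)%Re.
Proof.
move=> eps he.
have [N hN] := CV_Cauchy (E1 a) (exist _ (exp a) (E1_cvg a)) eps he.
exists N.+1 => n m hn hm.
case: n hn hm => // n hn; case: m => // m hm.
rewrite !ex_E1.
have := hN m n; rewrite /R_dist => h.
have h' : (Rabs (E1 a m - E1 a n) < eps)%Re.
  have hn' : (N <= n)%N := hn. have hm' : (n <= m)%N := hm.
  apply: h; apply/leP; [exact: leq_trans hn' hm' | exact: hn'].
eapply Rle_lt_trans; last exact: h'; exact: Rle_abs.
Qed.

Lemma fact_eq k : k`! = fact k.
Proof. by elim: k => // k IH; rewrite factS IH. Qed.

Lemma ccE k : ((k`!)%:R : cplx)^-1 = RtoC (/ INR (fact k))%Re.
Proof. rewrite fact_eq natC RtoC_inv //; exact: INR_fact_neq_0. Qed.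

Lemma cb_cc k : cb (((k`!)%:R : cplx)^-1) = (/ INR (fact k))%Re.
Proof.
rewrite ccE cb_RtoC Rabs_pos_eq //; left; apply: Rinv_0_lt_compat; exact: INR_fact_lt_0.
Qed.

Definition Pn m (A : 'M[cplx]_m) (N : nat) : 'M[cplx]_m :=
  \sum_(k < N) ((k`!)%:R)^-1 *: mxpow A k.

Lemma PnS m (A : 'M[cplx]_m) N : Pn A N.+1 = Pn A N + ((N`!)%:R)^-1 *: mxpow A N.
Proof. by rewrite /Pn big_ord_recr. Qed.

Lemma Pn0 m (A : 'M[cplx]_m) : Pn A 0 = 0.
Proof. by rewrite /Pn big_ord0. Qed.

Lemma bnd_Pn_diff m (A : 'M[cplx]_m) r n k : (0 <= r)%Re -> bnd A r -> (n <= k)%N ->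
  bnd (Pn A k - Pn A n) (ex (INR m * r) k - ex (INR m * r) n)%Re.
Proof.
move=> r0 hA hnk; rewrite -(subnKC hnk); elim: (k - n)%N => [|d IH].
  by rewrite addn0 subrr Rminus_diag; exact: bnd0.
rewrite addnS PnS addrAC.
have -> : (ex (INR m * r) (n + d).+1 - ex (INR m * r) n =
   (ex (INR m * r) (n + d) - ex (INR m * r) n) + (INR m * r) ^ (n + d) / INR (fact (n + d)))%Re.
  by change (ex (INR m * r) (n + d).+1) with (ex (INR m * r) (n + d) + (INR m * r) ^ (n + d) / INR (fact (n + d)))%Re; ring.
apply: bnd_add => //.
have h0 : (0 <= INR m * r)%Re by apply: Rmult_le_pos => //; exact: pos_INR.
eapply bnd_le; last first.
  apply: bnd_scale; last exact: (bnd_pow _ r0 hA).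
  exact: (pow_le _ _ h0).
by rewrite cb_cc /Rdiv Rmult_comm; right.
Qed.

Lemma ccomplete (s : nat -> cplx) :
  (forall eps, (0 < eps)%Re -> exists N, forall n m, (N <= n)%N -> (n <= m)%N -> (cb (s m - s n)%R < eps)%Re) ->
  exists L, forall eps, (0 < eps)%Re -> exists N, forall k, (N <= k)%N -> (cabs (s k - L)%R < eps)%Re.
Proof.
move=> H.
have key : forall n m N eps, (forall n m, (N <= n)%N -> (n <= m)%N -> (cb (s m - s n)%R < eps)%Re) ->
    (N <= n)%N -> (N <= m)%N -> (Rabs (re (s n) - re (s m)) < eps /\ Rabs (im (s n) - im (s m)) < eps)%Re.
  move=> n m N eps hN hn hm.
  case: (leqP n m) => hnm.
    have := hN n m hn hnm; rewrite /cb.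
    have -> : re (s m - s n) = (re (s m) - re (s n))%Re by [].
    have -> : im (s m - s n) = (im (s m) - im (s n))%Re by [].
    rewrite (Rabs_minus_sym (re (s n))) (Rabs_minus_sym (im (s n))).
    move=> h; pose proof (Rabs_pos (re (s m) - re (s n))); pose proof (Rabs_pos (im (s m) - im (s n))); lra.
  have := hN m n hm (ltnW hnm); rewrite /cb.
  have -> : re (s n - s m) = (re (s n) - re (s m))%Re by [].
  have -> : im (s n - s m) = (im (s n) - im (s m))%Re by [].
  move=> h; pose proof (Rabs_pos (re (s n) - re (s m))); pose proof (Rabs_pos (im (s n) - im (s m))); lra.
have hre : Cauchy_crit (fun k => re (s k)).
  move=> eps he; have [N hN] := H eps he; exists N => n m hn hm; rewrite /R_dist.
  by case: (key n m N eps hN (introT leP hn) (introT leP hm)).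
have him : Cauchy_crit (fun k => im (s k)).
  move=> eps he; have [N hN] := H eps he; exists N => n m hn hm; rewrite /R_dist.
  by case: (key n m N eps hN (introT leP hn) (introT leP hm)).
have [lr hlr] := R_complete _ hre.
have [li hli] := R_complete _ him.
exists (Cplx lr li) => eps he.
have he2 : (0 < eps / 2)%Re by lra.
have [N1 h1] := hlr _ he2.
have [N2 h2] := hli _ he2.
exists (maxn N1 N2) => k hk.
eapply Rle_lt_trans; first exact: cabs_cb.
have hk1 : (k >= N1)%coq_nat by apply/leP; apply: leq_trans hk; exact: leq_maxl.
have hk2 : (k >= N2)%coq_nat by apply/leP; apply: leq_trans hk; exact: leq_maxr.
have := h1 k hk1; have := h2 k hk2; rewrite /R_dist /cb /= /Rminus.
lra.
Qed.

Lemma mexp_exists m (A : 'M[cplx]_m) : exists E, is_mexp A E.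
Proof.
have [r [r0 hA]] := bnd_exists A.
have H : forall i j, exists L, forall eps, (0 < eps)%Re -> exists N, forall k, (N <= k)%N ->
    (cabs (Pn A k i j - L)%R < eps)%Re.
  move=> i j; apply: ccomplete => eps he.
  have [N hN] := ex_cauchy (INR m * r) he.
  exists N => n k hn hk.
  eapply Rle_lt_trans; last exact: (hN n k hn hk).
  have h := bnd_Pn_diff r0 hA hk i j; rewrite !mxE in h.
exact: h.
exists (\matrix_(i, j) proj1_sig (constructive_indefinite_description _ (H i j))).
move=> i j eps he; rewrite mxE.
exact: (proj2_sig (constructive_indefinite_description _ (H i j)) eps he).
Qed.

Lemma mexp_spec m (A : 'M[cplx]_m) : is_mexp A (mexp A).
Proof.
rewrite /mexp; case: excluded_middle_informative => [h|h].
  exact: (proj2_sig (constructive_indefinite_description _ h)).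
by case: h; exact: mexp_exists.
Qed.

Definition clim (s : nat -> cplx) (L : cplx) :=
  forall eps, (0 < eps)%Re -> exists N, forall k, (N <= k)%N -> (cb (s k - L)%R < eps)%Re.

Lemma mx_lim_clim m n (s : nat -> 'M[cplx]_(m, n)) L :
  mx_lim s L -> forall i j, clim (fun k => s k i j) (L i j).
Proof.
move=> H i j eps he.
have he2 : (0 < eps / 2)%Re by lra.
have [N hN] := H i j _ he2; exists N => k hk.
eapply Rle_lt_trans; first exact: cb_cabs.
have := hN k hk; lra.
Qed.

Lemma clim_ext s t L : (forall k, s k = t k) -> clim s L -> clim t L.
Proof. by move=> e H eps he; have [N hN] := H eps he; exists N => k hk; rewrite -e; exact: hN. Qed.

Lemma clim_const c : clim (fun _ => c) c.
Proof. by move=> eps he; exists 0%N => k _; rewrite subrr cb0. Qed.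

Lemma clim_add s t a b : clim s a -> clim t b -> clim (fun k => s k + t k) (a + b).
Proof.
move=> Hs Ht eps he.
have he2 : (0 < eps / 2)%Re by lra.
have [N1 h1] := Hs _ he2; have [N2 h2] := Ht _ he2.
exists (maxn N1 N2) => k hk.
have -> : s k + t k - (a + b) = (s k - a) + (t k - b).
  by rewrite opprD addrACA.
eapply Rle_lt_trans; first exact: cb_add.
have := h1 k (leq_trans (leq_maxl _ _) hk); have := h2 k (leq_trans (leq_maxr _ _) hk); lra.
Qed.

Lemma clim_opp s a : clim s a -> clim (fun k => - s k) (- a).
Proof.
move=> H eps he; have [N hN] := H eps he; exists N => k hk.
by rewrite -opprD cb_opp; exact: hN.
Qed.

Lemma clim_mul c s a : clim s a -> clim (fun k => c * s k) (c * a).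
Proof.
move=> H eps he.
have hc := cb_ge0 c.
have he' : (0 < eps / (cb c + 1))%Re by apply: Rdiv_lt_0_compat; lra.
have [N hN] := H _ he'; exists N => k hk.
rewrite -mulrBr; eapply Rle_lt_trans; first exact: cb_mul.
apply: (Rle_lt_trans _ (cb c * (eps / (cb c + 1)))).
  apply: Rmult_le_compat_l => //; left; exact: hN k hk.
have e : (eps = (cb c + 1) * (eps / (cb c + 1)))%Re by field; lra.
rewrite {2}e; nra.
Qed.

Lemma clim_mulr c s a : clim s a -> clim (fun k => s k * c) (a * c).
Proof.
move=> H; rewrite mulrC; apply: (clim_ext (s := fun k => c * s k)) => [k|]; first by rewrite mulrC.
exact: clim_mul.
Qed.

Lemma clim_sum (I : Type) (r : seq I) (F : I -> nat -> cplx) L :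
  (forall i, clim (F i) (L i)) -> clim (fun k => \sum_(i <- r) F i k) (\sum_(i <- r) L i).
Proof.
move=> H; elim: r => [|x r IH].
  rewrite big_nil; apply: (clim_ext (s := fun _ => 0)) => [k|]; first by rewrite big_nil.
  exact: clim_const.
rewrite big_cons; apply: (clim_ext (s := fun k => F x k + \sum_(i <- r) F i k)) => [k|].
  by rewrite big_cons.
exact: clim_add.
Qed.

Lemma clim_shift s a : clim s a -> clim (fun k => s k.+1) a.
Proof. by move=> H eps he; have [N hN] := H eps he; exists N => k hk; apply: hN; exact: leqW. Qed.

Lemma cid1 (a b z : cplx) : a - b = (z - b) - (z - a).
Proof. case: a => ? ?; case: b => ? ?; case: z => ? ?; apply: cplx_ext => /=; ring. Qed.
Lemma cid2 (a z : cplx) : a = z - (z - a).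
Proof. case: a => ? ?; case: z => ? ?; apply: cplx_ext => /=; ring. Qed.

Lemma clim_uniq s a b : clim s a -> clim s b -> a = b.
Proof.
move=> Ha Hb; apply/eqP; rewrite -subr_eq0; apply/eqP.
case: (Req_dec (cb (a - b)) 0) => [h|h]; first exact: cb_eq0.
have hp : (0 < cb (a - b)%R / 2)%Re by have := cb_ge0 (a - b); lra.
have [N1 h1] := Ha _ hp; have [N2 h2] := Hb _ hp.
have k1 := h1 (maxn N1 N2) (leq_maxl _ _).
have k2 := h2 (maxn N1 N2) (leq_maxr _ _).
have := cb_sub (s (maxn N1 N2) - b) (s (maxn N1 N2) - a).
rewrite -cid1; lra.
Qed.

Lemma clim_le s a b : (forall k, (cb (s k) <= b)%Re) -> clim s a -> (cb a <= b)%Re.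
Proof.
move=> hb H; case: (Rle_lt_dec (cb a) b) => // hlt.
have he : (0 < cb a - b)%Re by lra.
have [N hN] := H _ he.
have k1 := hN N (leqnn N).
have := cb_sub (s N) (s N - a); rewrite -cid2.
have := hb N; lra.
Qed.

Definition mlim m n (s : nat -> 'M[cplx]_(m, n)) (L : 'M[cplx]_(m, n)) :=
  forall i j, clim (fun k => s k i j) (L i j).

Lemma mlim_mexp m (A : 'M[cplx]_m) : mlim (Pn A) (mexp A).
Proof. exact: mx_lim_clim (mexp_spec A). Qed.

Lemma mlim_mull m n p (C : 'M[cplx]_(m, n)) (s : nat -> 'M[cplx]_(n, p)) L :
  mlim s L -> mlim (fun k => C *m s k) (C *m L).
Proof.
move=> H i j; rewrite mxE.
apply: (clim_ext (s := fun k => \sum_l C i l * s k l j)) => [k|]; first by rewrite mxE.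
apply: clim_sum => l; exact: clim_mul.
Qed.

Lemma mlim_mulr m n p (C : 'M[cplx]_(n, p)) (s : nat -> 'M[cplx]_(m, n)) L :
  mlim s L -> mlim (fun k => s k *m C) (L *m C).
Proof.
move=> H i j; rewrite mxE.
apply: (clim_ext (s := fun k => \sum_l s k i l * C l j)) => [k|]; first by rewrite mxE.
apply: clim_sum => l; exact: clim_mulr.
Qed.

Lemma mlim_add m n (s t : nat -> 'M[cplx]_(m, n)) L1 L2 :
  mlim s L1 -> mlim t L2 -> mlim (fun k => s k + t k) (L1 + L2).
Proof.
move=> H1 H2 i j; rewrite mxE.
apply: (clim_ext (s := fun k => s k i j + t k i j)) => [k|]; first by rewrite mxE.
exact: clim_add.
Qed.

Lemma mlim_opp m n (s : nat -> 'M[cplx]_(m, n)) L :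
  mlim s L -> mlim (fun k => - s k) (- L).
Proof.
move=> H i j; rewrite mxE.
apply: (clim_ext (s := fun k => - s k i j)) => [k|]; first by rewrite mxE.
exact: clim_opp.
Qed.

Lemma mlim_scale m n c (s : nat -> 'M[cplx]_(m, n)) L :
  mlim s L -> mlim (fun k => c *: s k) (c *: L).
Proof.
move=> H i j; rewrite mxE.
apply: (clim_ext (s := fun k => c * s k i j)) => [k|]; first by rewrite mxE.
exact: clim_mul.
Qed.

Lemma mlim_shift m n (s : nat -> 'M[cplx]_(m, n)) L : mlim s L -> mlim (fun k => s k.+1) L.
Proof. by move=> H i j; exact: (clim_shift (H i j)). Qed.

Lemma mlim_uniq m n (s : nat -> 'M[cplx]_(m, n)) L1 L2 : mlim s L1 -> mlim s L2 -> L1 = L2.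
Proof. by move=> H1 H2; apply/matrixP => i j; apply: clim_uniq (H1 i j) (H2 i j). Qed.

Lemma mlim_bnd m n (s : nat -> 'M[cplx]_(m, n)) L b : (forall k, bnd (s k) b) -> mlim s L -> bnd L b.
Proof. by move=> hb H i j; apply: clim_le (H i j) => k; exact: hb. Qed.

Lemma Pn_comm m (S B : 'M[cplx]_m) N : S *m B = B *m S -> S *m Pn B N = Pn B N *m S.
Proof.
move=> h; rewrite /Pn mulmx_sumr mulmx_suml; apply: eq_bigr => k _.
by rewrite -scalemxAr -scalemxAl pow_comm.
Qed.

Lemma mexp_comm m (S B : 'M[cplx]_m) : S *m B = B *m S -> S *m mexp B = mexp B *m S.
Proof.
move=> h; have h1 := mlim_mull S (mlim_mexp B); have h2 := mlim_mulr S (mlim_mexp B).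
apply: (mlim_uniq h1) => i j.
apply: (@clim_ext (fun k => (Pn B k *m S) i j)); last exact: h2.
by move=> k; rewrite Pn_comm.
Qed.

Section RealIneq.
Local Open Scope R_scope.
Lemma rineq1 u b c h k : 0 <= u -> 0 <= b -> 0 <= c -> Rabs h <= 1 ->
  u * ((b + Rabs h * c) * (h^2 * INR k ^ 2 * (u * (b + c) + 1) ^ k)) +
  (h * h * INR k) * (u * ((u * (c * c)) * (u * b) ^ k.-1)) <=
  h^2 * INR (S k) ^ 2 * (u * (b + c) + 1) ^ (S k).
Proof.
intros hu hb hc hh.
set a := u * (b + c) + 1.
have ha1 : 1 <= a by unfold a; nra.
have hP : 0 <= a ^ k by apply pow_le; lra.
have hh2 : 0 <= h ^ 2 by nra.
have hk : 0 <= INR k by apply pos_INR.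
have hc' : Rabs h * c <= c by pose proof (Rabs_pos h); nra.
have hA : u * (b + Rabs h * c) <= a by unfold a; pose proof (Rabs_pos h); nra.
have stepA : u * ((b + Rabs h * c) * (h^2 * INR k ^ 2 * a ^ k)) <= a * (h^2 * INR k ^ 2 * a ^ k).
  rewrite -Rmult_assoc. apply Rmult_le_compat_r; [|exact hA].
  apply Rmult_le_pos; [apply Rmult_le_pos|]; auto; nra.
have stepB : (h * h * INR k) * (u * ((u * (c * c)) * (u * b) ^ k.-1)) <= (h^2 * INR k) * (a * a ^ k).
  { destruct k as [|j].
  - simpl; nra.
  - simpl.
    have hub : 0 <= u * b by nra.
    have hub2 : u * b <= a by unfold a; nra.
    have huc : 0 <= u * c by nra.
    have huc2 : u * c <= a by unfold a; nra.
    have hpj : (u * b) ^ j <= a ^ j by apply pow_incr; lra.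
    have hpj0 : 0 <= (u * b) ^ j by apply pow_le; lra.
    have e1 : u * ((u * (c * c)) * (u * b) ^ j) = (u * c) * (u * c) * (u * b) ^ j by ring.
    have e2 : a * a ^ S j = a * a * a ^ j by simpl; ring.
    rewrite e1 e2.
    have e3 : h * h * INR (S j) = h ^ 2 * INR (S j) by ring.
    rewrite e3.
    apply Rmult_le_compat_l; [apply Rmult_le_pos; auto; apply pos_INR|].
    apply Rmult_le_compat; try nra. }
eapply Rle_trans; [apply Rplus_le_compat; [exact stepA|exact stepB]|].
rewrite S_INR. simpl (a ^ S k).
have : 0 <= h ^ 2 * a * a ^ k * (INR k + 1) by apply Rmult_le_pos; [apply Rmult_le_pos; [nra|lra]|lra].
nra.
Qed.

Lemma INR_le_pow2 k : INR k <= 2 ^ k.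
Proof.
elim: k => [|k IH]; first by simpl; lra.
rewrite S_INR /=. have := pow_le 2 k; have : 1 <= 2 ^ k by apply pow_R1_Rle; lra. lra.
Qed.

Lemma INR_sq_le_pow4 k : INR k ^ 2 <= 4 ^ k.
Proof.
have e : 4 = 2 * 2 by ring.
rewrite e Rpow_mult_distr.
have h := INR_le_pow2 k; have := pos_INR k. simpl. nra.
Qed.

End RealIneq.

Lemma cid3 (t1 t2 t3 t4 : cplx) (h n : R) :
  t1 - t2 - (RtoC h * RtoC (n + 1)) * t3 =
  t1 - (t2 + RtoC h * t3) - (RtoC h * RtoC n) * (t3 + RtoC h * t4) + (RtoC h * RtoC h * RtoC n) * t4.
Proof.
case: t1 => ? ?; case: t2 => ? ?; case: t3 => ? ?; case: t4 => ? ?; apply: cplx_ext => /=; ring.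
Qed.

Lemma mid3 m (T1 T2 T3 T4 : 'M[cplx]_m) (h n : R) :
  T1 - T2 - (RtoC h * RtoC (n + 1)) *: T3 =
  T1 - (T2 + RtoC h *: T3) - (RtoC h * RtoC n) *: (T3 + RtoC h *: T4) + (RtoC h * RtoC h * RtoC n) *: T4.
Proof. apply/matrixP => i j; rewrite !mxE; exact: cid3. Qed.

Section Deriv.
Variables (m : nat) (B C : 'M[cplx]_m) (h : R).
Hypothesis hBC : C *m B = B *m C.

Let X := B + RtoC h *: C.

Definition Dk k := mxpow X k - mxpow B k - (RtoC h * k%:R) *: (C *m mxpow B k.-1).

Lemma Dk0 : Dk 0 = 0.
Proof. by rewrite /Dk mulr0 scale0r subr0 subrr. Qed.

Lemma D_rec k : Dk k.+1 = X *m Dk k + (RtoC h * RtoC h * k%:R) *: (C *m C *m mxpow B k.-1).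
Proof.
case: k => [|j].
  rewrite Dk0 mulmx0 mulr0 scale0r addr0 /Dk !mxpowS !mxpow0 !mulmx1 mulr1 /X.
  by rewrite (addrC B) addrK subrr.
rewrite /Dk [mxpow X j.+2]mxpowS [mxpow B j.+2]mxpowS [j.+2.-1]/= mxpowS.
rewrite !natC (S_INR (S j)).
rewrite mulmxBr mulmxBr -scalemxAr.
have -> : X *m (B *m mxpow B j) = B *m (B *m mxpow B j) + RtoC h *: (C *m (B *m mxpow B j)).
  by rewrite /X mulmxDl -scalemxAl.
have -> : X *m (C *m mxpow B j) = C *m (B *m mxpow B j) + RtoC h *: (C *m (C *m mxpow B j)).
  by rewrite /X mulmxDl -scalemxAl !mulmxA hBC.
rewrite -mulmxA.
exact: mid3.
Qed.

End Deriv.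

Section Bounds.
Variables (m : nat) (B C : 'M[cplx]_m) (h b c : R).
Hypotheses (hBC : C *m B = B *m C) (hb : (0 <= b)%Re) (hc : (0 <= c)%Re)
  (hB : bnd B b) (hC : bnd C c) (hh : (Rabs h <= 1)%Re).

Let a := (INR m * (b + c) + 1)%Re.

Lemma bnd_X : bnd (B + RtoC h *: C) (b + Rabs h * c)%Re.
Proof. apply: bnd_add => //; rewrite -cb_RtoC; exact: bnd_scale. Qed.

Lemma bnd_Dk k : bnd (Dk B C h k) (h ^ 2 * INR k ^ 2 * a ^ k)%Re.
Proof.
have hu := pos_INR m.
have ha : (0 <= a)%Re by rewrite /a; nra.
elim: k => [|k IH].
  rewrite Dk0; eapply bnd_le; last exact: bnd0. right; simpl; ring.
rewrite (D_rec h hBC).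
have hd : (0 <= h ^ 2 * INR k ^ 2 * a ^ k)%Re.
  apply: Rmult_le_pos; last exact: pow_le.
  apply: Rmult_le_pos; [exact: pow2_ge_0 | apply: pow_le; exact: pos_INR].
have hX0 : (0 <= b + Rabs h * c)%Re by pose proof (Rabs_pos h); nra.
have hcc : (0 <= INR m * (c * c))%Re by nra.
have hub : (0 <= INR m * b)%Re by nra.
eapply bnd_le; last first.
  apply: bnd_add.
    exact: (bnd_mul hX0 hd bnd_X IH).
  apply: bnd_scale; last first.
    apply: (bnd_mul hcc (pow_le _ _ hub) (bnd_mul hc hc hC hC) (bnd_pow _ hb hB)).
  apply: Rmult_le_pos => //; apply: Rmult_le_pos => //; exact: pow_le.
rewrite natC -!RtoC_mul cb_RtoC (Rabs_pos_eq (h * h * INR k)); last first.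
  have := pos_INR k; nra.
exact: rineq1.
Qed.

End Bounds.

Lemma cid4 (p1 p2 w u1 u2 u3 : cplx) (f1 n hh : R) :
  (p1 + RtoC f1 * u1) - (p2 + RtoC f1 * u2) - RtoC hh * (w + RtoC (f1 * n) * u3)
  = (p1 - p2 - RtoC hh * w) + RtoC f1 * (u1 - u2 - (RtoC hh * RtoC n) * u3).
Proof.
case: p1 => ? ?; case: p2 => ? ?; case: w => ? ?; case: u1 => ? ?; case: u2 => ? ?; case: u3 => ? ?.
apply: cplx_ext => /=; ring.
Qed.

Lemma mid4 m (P1 P2 W U1 U2 U3 : 'M[cplx]_m) (f1 n hh : R) :
  (P1 + RtoC f1 *: U1) - (P2 + RtoC f1 *: U2) - RtoC hh *: (W + RtoC (f1 * n) *: U3)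
  = (P1 - P2 - RtoC hh *: W) + RtoC f1 *: (U1 - U2 - (RtoC hh * RtoC n) *: U3).
Proof. apply/matrixP => i j; rewrite !mxE; exact: cid4. Qed.

Section QB.
Variables (m : nat) (B C : 'M[cplx]_m) (h b c : R).
Hypotheses (hBC : C *m B = B *m C) (hb : (0 <= b)%Re) (hc : (0 <= c)%Re)
  (hB : bnd B b) (hC : bnd C c) (hh : (Rabs h <= 1)%Re).

Let a := (INR m * (b + c) + 1)%Re.
Let X := B + RtoC h *: C.

Definition Qn N := Pn X N.+1 - Pn B N.+1 - RtoC h *: (C *m Pn B N).

Lemma Q0 : Qn 0 = 0.
Proof. by rewrite /Qn !PnS !Pn0 !add0r mulmx0 scaler0 subr0 !mxpow0 subrr. Qed.

Lemma Q_rec N : Qn N.+1 = Qn N + ((N.+1)`!%:R)^-1 *: Dk B C h N.+1.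
Proof.
rewrite /Qn /Dk (PnS X N.+1) (PnS B N.+1) (PnS B N) mulmxDr -scalemxAr [N.+1.-1]/= !ccE natC.
have e : (/ INR (fact N) = / INR (fact N.+1) * INR N.+1)%Re.
  change (fact N.+1) with (N.+1 * fact N)%coq_nat.
  rewrite mult_INR; field; split; [exact: INR_fact_neq_0 | exact: not_0_INR].
rewrite e; exact: mid4.
Qed.

Lemma bnd_Q N : bnd (Qn N) (h ^ 2 * ex (4 * a) N.+1)%Re.
Proof.
have hu := pos_INR m.
have ha : (0 <= a)%Re by rewrite /a; nra.
have h2 := pow2_ge_0 h.
elim: N => [|N IH].
  rewrite Q0; eapply bnd_le; last exact: bnd0.
  rewrite /=; nra.
rewrite Q_rec; eapply bnd_le; last first.
  apply: (bnd_add IH); apply: bnd_scale; last exact: (bnd_Dk hBC hb hc hB hC hh).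
  apply: Rmult_le_pos; last exact: pow_le.
  apply: Rmult_le_pos => //; apply: pow_le; exact: pos_INR.
rewrite cb_cc.
change (ex (4 * a) N.+2) with (ex (4 * a) N.+1 + (4 * a) ^ N.+1 / INR (fact N.+1))%Re.
rewrite Rpow_mult_distr.
have hk := INR_sq_le_pow4 N.+1.
have hf : (0 < / INR (fact N.+1))%Re by apply: Rinv_0_lt_compat; exact: INR_fact_lt_0.
have hP := pow_le _ N.+1 ha.
rewrite /Rdiv.
have : (/ INR (fact N.+1) * (h ^ 2 * INR N.+1 ^ 2 * a ^ N.+1) <=
        h ^ 2 * (4 ^ N.+1 * a ^ N.+1 * / INR (fact N.+1)))%Re.
  have e1 : (/ INR (fact N.+1) * (h ^ 2 * INR N.+1 ^ 2 * a ^ N.+1) =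
            (h ^ 2 * a ^ N.+1 * / INR (fact N.+1)) * INR N.+1 ^ 2)%Re by ring.
  have e2 : (h ^ 2 * (4 ^ N.+1 * a ^ N.+1 * / INR (fact N.+1)) =
            (h ^ 2 * a ^ N.+1 * / INR (fact N.+1)) * 4 ^ N.+1)%Re by ring.
  rewrite e1 e2; apply: Rmult_le_compat_l => //.
  apply: Rmult_le_pos; [apply: Rmult_le_pos|]; lra.
rewrite -/a => H1.
have e3 : (h ^ 2 * (ex (4 * a) N.+1 + 4 ^ N.+1 * a ^ N.+1 * / INR (fact N.+1)) = h ^ 2 * ex (4 * a) N.+1 + h ^ 2 * (4 ^ N.+1 * a ^ N.+1 * / INR (fact N.+1)))%Re by ring.
rewrite e3; lra.
Qed.

Lemma mexp_deriv :
  bnd (mexp X - mexp B - RtoC h *: (C *m mexp B)) (h ^ 2 * exp (4 * a))%Re.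
Proof.
have hu := pos_INR m.
have ha : (0 <= 4 * a)%Re by rewrite /a; nra.
have L := mlim_add (mlim_add (mlim_shift (mlim_mexp X)) (mlim_opp (mlim_shift (mlim_mexp B))))
  (mlim_opp (mlim_scale (RtoC h) (mlim_mull C (mlim_mexp B)))).
apply: (mlim_bnd _ L) => N.
eapply bnd_le; last exact: (bnd_Q N).
apply: Rmult_le_compat_l; [exact: pow2_ge_0 | exact: ex_le_exp].
Qed.

End QB.

Definition qd (f : R -> cplx) (d : cplx) :=
  exists K del, (0 < del)%Re /\ (0 <= K)%Re /\
    forall h, (Rabs h < del)%Re -> (cb (f h - f 0%Re - RtoC h * d)%R <= K * h ^ 2)%Re.

Lemma qd_ext f g d d' : (forall h, f h = g h) -> d = d' -> qd f d -> qd g d'.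
Proof.
move=> e <- [K [del [h0 [hK H]]]]; exists K, del; split => // ; split => // h hh.
by rewrite -!e; exact: H.
Qed.

Lemma qd_const c : qd (fun _ => c) 0.
Proof.
exists 0%Re, 1%Re; split; first lra; split; first lra.
by move=> h _; rewrite subrr mulr0 subr0 cb0; right; ring.
Qed.

Lemma cid_add (a b c d e f : cplx) (h : R) :
  a + b - (c + d) - RtoC h * (e + f) = (a - c - RtoC h * e) + (b - d - RtoC h * f).
Proof.
case: a => ? ?; case: b => ? ?; case: c => ? ?; case: d => ? ?; case: e => ? ?; case: f => ? ?.
apply: cplx_ext => /=; ring.
Qed.

Lemma qd_add f g d1 d2 : qd f d1 -> qd g d2 -> qd (fun h => f h + g h) (d1 + d2).
Proof.
move=> [K1 [e1 [he1 [hK1 H1]]]] [K2 [e2 [he2 [hK2 H2]]]].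
exists (K1 + K2)%Re, (Rmin e1 e2); split; first exact: Rmin_pos.
split; first lra.
move=> h hh.
have hh1 : (Rabs h < e1)%Re by exact: (Rlt_le_trans _ _ _ hh (Rmin_l _ _)).
have hh2 : (Rabs h < e2)%Re by exact: (Rlt_le_trans _ _ _ hh (Rmin_r _ _)).
rewrite cid_add; eapply Rle_trans; first exact: cb_add.
have := H1 h hh1; have := H2 h hh2; lra.
Qed.

Lemma cid_mul (fh gh f0 g0 d1 d2 : cplx) (h : R) :
  fh * gh - f0 * g0 - RtoC h * (d1 * g0 + f0 * d2) =
  f0 * (gh - g0 - RtoC h * d2) + g0 * (fh - f0 - RtoC h * d1) +
  (RtoC h * d1 + (fh - f0 - RtoC h * d1)) * (RtoC h * d2 + (gh - g0 - RtoC h * d2)).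
Proof.
case: fh => ? ?; case: gh => ? ?; case: f0 => ? ?; case: g0 => ? ?; case: d1 => ? ?; case: d2 => ? ?.
apply: cplx_ext => /=; ring.
Qed.

Lemma first_order (h d K : R) (r : cplx) : (Rabs h <= 1)%Re -> (0 <= K)%Re ->
  (cb r <= K * h ^ 2)%Re -> (cb (RtoC h * RtoC d + r)%R <= Rabs h * (Rabs d + K))%Re.
Proof.
move=> hh hK hr; eapply Rle_trans; first exact: cb_add.
rewrite -RtoC_mul cb_RtoC Rabs_mult.
have : (h ^ 2 <= Rabs h)%Re.
  rewrite -(Rabs_pos_eq (h ^ 2)); last exact: pow2_ge_0.
  rewrite -RPow_abs /=; have := Rabs_pos h; nra.
nra.
Qed.

Lemma qd_mul f g d1 d2 : qd f d1 -> qd g d2 ->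
  qd (fun h => f h * g h) (d1 * g 0%Re + f 0%Re * d2).
Proof.
move=> [K1 [e1 [he1 [hK1 H1]]]] [K2 [e2 [he2 [hK2 H2]]]].
set f0 := f 0%Re; set g0 := g 0%Re.
have hf0 := cb_ge0 f0; have hg0 := cb_ge0 g0.
have hd1 := cb_ge0 d1; have hd2 := cb_ge0 d2.
exists (cb f0 * K2 + cb g0 * K1 + (cb d1 + K1) * (cb d2 + K2))%Re, (Rmin 1 (Rmin e1 e2)).
split; first by apply: Rmin_pos; [lra| exact: Rmin_pos].
split; first nra.
move=> h hh.
have hh0 : (Rabs h <= 1)%Re by left; exact: (Rlt_le_trans _ _ _ hh (Rmin_l _ _)).
have hh1 : (Rabs h < e1)%Re by apply: (Rlt_le_trans _ _ _ hh); eapply Rle_trans; [exact: Rmin_r| exact: Rmin_l].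
have hh2 : (Rabs h < e2)%Re by apply: (Rlt_le_trans _ _ _ hh); eapply Rle_trans; [exact: Rmin_r| exact: Rmin_r].
rewrite cid_mul.
set r1 := f h - f0 - RtoC h * d1.
set r2 := g h - g0 - RtoC h * d2.
have b1 : (cb r1 <= K1 * h ^ 2)%Re by exact: H1.
have b2 : (cb r2 <= K2 * h ^ 2)%Re by exact: H2.
have c1 : (cb (RtoC h * d1 + r1)%R <= Rabs h * (cb d1 + K1))%Re.
  eapply Rle_trans; first exact: cb_add.
  rewrite cb_RtoCmul.
  have : (h ^ 2 <= Rabs h)%Re.
    rewrite -(Rabs_pos_eq (h ^ 2)); last exact: pow2_ge_0.
    rewrite -RPow_abs /=; have := Rabs_pos h; nra.
  nra.
have c2 : (cb (RtoC h * d2 + r2)%R <= Rabs h * (cb d2 + K2))%Re.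
  eapply Rle_trans; first exact: cb_add.
  rewrite cb_RtoCmul.
  have : (h ^ 2 <= Rabs h)%Re.
    rewrite -(Rabs_pos_eq (h ^ 2)); last exact: pow2_ge_0.
    rewrite -RPow_abs /=; have := Rabs_pos h; nra.
  nra.
have m1 := cb_mul f0 r2.
have m2 := cb_mul g0 r1.
have m3 := cb_mul (RtoC h * d1 + r1) (RtoC h * d2 + r2).
have a1 := cb_add (f0 * r2) (g0 * r1).
have a2 := cb_add (f0 * r2 + g0 * r1) ((RtoC h * d1 + r1) * (RtoC h * d2 + r2)).
have hsq : (Rabs h * (cb d1 + K1) * (Rabs h * (cb d2 + K2)) = h ^ 2 * ((cb d1 + K1) * (cb d2 + K2)))%Re.
  rewrite -(Rabs_pos_eq (h ^ 2)); last exact: pow2_ge_0.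
  rewrite -RPow_abs /=; ring.
have p3 : (cb (RtoC h * d1 + r1)%R * cb (RtoC h * d2 + r2)%R <= h ^ 2 * ((cb d1 + K1) * (cb d2 + K2)))%Re.
  rewrite -hsq; apply: Rmult_le_compat => //; exact: cb_ge0.
have p1 : (cb f0 * cb r2 <= cb f0 * (K2 * h ^ 2))%Re by apply: Rmult_le_compat_l.
have p2 : (cb g0 * cb r1 <= cb g0 * (K1 * h ^ 2))%Re by apply: Rmult_le_compat_l.
have e : ((cb f0 * K2 + cb g0 * K1 + (cb d1 + K1) * (cb d2 + K2)) * h ^ 2 =
  cb f0 * (K2 * h ^ 2) + cb g0 * (K1 * h ^ 2) + h ^ 2 * ((cb d1 + K1) * (cb d2 + K2)))%Re by ring.
rewrite e -/f0 -/g0.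
eapply Rle_trans; first exact: cb_add.
apply: Rplus_le_compat.
  eapply Rle_trans; first exact: cb_add.
  apply: Rplus_le_compat; (eapply Rle_trans; first exact: cb_mul); assumption.
eapply Rle_trans; first exact: cb_mul.
exact: p3.
Qed.

Lemma qd_sum (I : Type) (r : seq I) (F : I -> R -> cplx) D :
  (forall i, qd (F i) (D i)) -> qd (fun h => \sum_(i <- r) F i h) (\sum_(i <- r) D i).
Proof.
move=> H; elim: r => [|x r IH].
  by apply: (qd_ext _ _ (qd_const 0)) => [h|]; rewrite big_nil.
apply: (qd_ext _ _ (qd_add (H x) IH)) => [h|]; by rewrite big_cons.
Qed.

Lemma qd_mulc c f d : qd f d -> qd (fun h => c * f h) (c * d).
Proof. by move=> H; apply: (qd_ext _ _ (qd_mul (qd_const c) H)) => //; rewrite mul0r add0r. Qed.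

Lemma widen_neq_max n (j : 'I_n) : widen_ord (leqnSn n) j != ord_max.
Proof. apply/eqP => /(congr1 val) /= e; have := ltn_ord j; by rewrite e ltnn. Qed.

Lemma widen_eqE n (i j : 'I_n) : (widen_ord (leqnSn n) j == widen_ord (leqnSn n) i) = (j == i).
Proof. by apply/eqP/eqP => [/(congr1 val) /= e|->]; [apply: val_inj|]. Qed.

Lemma qd_prod n (F : 'I_n -> R -> cplx) D : (forall i, qd (F i) (D i)) ->
  qd (fun h => \prod_(i < n) F i h) (\sum_(j < n) D j * \prod_(i < n | j != i) F i 0%Re).
Proof.
elim: n F D => [|n IH] F D H.
  by apply: (qd_ext _ _ (qd_const 1)) => [h|]; rewrite big_ord0.
pose w := widen_ord (leqnSn n).
have H1 := IH (fun i => F (w i)) (fun i => D (w i)) (fun i => H (w i)).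
apply: (qd_ext _ _ (qd_mul H1 (H ord_max))) => [h|]; first by rewrite big_ord_recr.
rewrite [in RHS]big_ord_recr /= mulr_suml.
congr (_ + _).
  apply: eq_bigr => j _.
  rewrite [in RHS]big_mkcond big_ord_recr /= -big_mkcond /=.
  rewrite widen_neq_max -mulrA; congr (_ * (_ * _)).
rewrite mulrC; congr (_ * _).
rewrite [in RHS]big_mkcond big_ord_recr /= eqxx mulr1.
apply: eq_bigr => i _; by rewrite eq_sym widen_neq_max.
Qed.

Definition qdM m n (F : R -> 'M[cplx]_(m, n)) (F1 : 'M[cplx]_(m, n)) :=
  forall i j, qd (fun h => F h i j) (F1 i j).

Lemma det_deriv_alg n (A A1 : 'M[cplx]_n) :
  \sum_(s : 'S_n) (-1) ^+ s * (\sum_(j < n) A1 j (s j) * \prod_(i < n | j != i) A i (s i))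
  = \sum_(j < n) \sum_(k < n) A1 j k * cofactor A j k.
Proof.
under eq_bigr => s _ do rewrite mulr_sumr.
rewrite exchange_big /=; apply: eq_bigr => j _.
under [RHS]eq_bigr => k _ do rewrite expand_cofactor mulr_sumr.
rewrite (partition_big (fun s : 'S_n => s j) predT) //=.
apply: eq_bigr => k _; apply: eq_bigr => s /eqP <-.
by rewrite mulrCA.
Qed.

Lemma qd_det n (F : R -> 'M[cplx]_n) F1 : qdM F F1 ->
  qd (fun h => \det (F h)) (\sum_(j < n) \sum_(k < n) F1 j k * cofactor (F 0%Re) j k).
Proof.
move=> H; rewrite -det_deriv_alg.
apply: (qd_ext _ _ (qd_sum (index_enum _) (fun s : 'S_n => qd_mulc ((-1) ^+ s)
   (qd_prod (fun i => H i (s i)))))) => //.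
Qed.

Lemma qdM_const m n (A : 'M[cplx]_(m, n)) : qdM (fun _ => A) 0.
Proof. by move=> i j; rewrite mxE; exact: qd_const. Qed.

Lemma qdM_add m n (F G : R -> 'M[cplx]_(m, n)) F1 G1 :
  qdM F F1 -> qdM G G1 -> qdM (fun h => F h + G h) (F1 + G1).
Proof.
move=> HF HG i j; apply: (qd_ext _ _ (qd_add (HF i j) (HG i j))) => [h|]; by rewrite mxE.
Qed.

Lemma qdM_mul m n p (F : R -> 'M[cplx]_(m, n)) (G : R -> 'M[cplx]_(n, p)) F1 G1 :
  qdM F F1 -> qdM G G1 -> qdM (fun h => F h *m G h) (F1 *m G 0%Re + F 0%Re *m G1).
Proof.
move=> HF HG i j.
apply: (qd_ext _ _ (qd_sum (index_enum _) (fun k => qd_mul (HF i k) (HG k j)))) => [h|].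
  by rewrite mxE.
by rewrite !mxE -big_split.
Qed.

Lemma cid_pd (a b d : cplx) (h : R) : (h <> 0)%Re ->
  RtoC (/ h) * (a - b) - d = RtoC (/ h) * (a - b - RtoC h * d).
Proof.
move=> hh; case: a => ? ?; case: b => ? ?; case: d => ? ?; apply: cplx_ext => /=; field; exact: hh.
Qed.

Lemma qd_pderiv (g : R -> R -> cplx) x y d :
  qd (fun h => g (x + h)%Re y) d -> has_pderiv_x g x y d.
Proof.
move=> [K [del [hdel [hK H]]]] eps he.
exists (Rmin del (eps / (K + 1))); split.
  apply: Rmin_pos => //; apply: Rdiv_lt_0_compat; lra.
move=> h hn hh.
have hh1 : (Rabs h < del)%Re by exact: (Rlt_le_trans _ _ _ hh (Rmin_l _ _)).
have hh2 : (Rabs h < eps / (K + 1))%Re by exact: (Rlt_le_trans _ _ _ hh (Rmin_r _ _)).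
have := H h hh1; rewrite Rplus_0_r => hb.
eapply Rle_lt_trans; first exact: cabs_cb.
rewrite cid_pd // cb_RtoCmul Rabs_inv.
have ha : (0 < Rabs h)%Re by apply: Rabs_pos_lt.
have e : (h ^ 2 = Rabs h * Rabs h)%Re by rewrite -Rabs_mult Rabs_pos_eq /=; nra.
apply: (Rle_lt_trans _ (/ Rabs h * (K * h ^ 2))).
  apply: Rmult_le_compat_l => //; left; exact: Rinv_0_lt_compat.
rewrite e.
have -> : (/ Rabs h * (K * (Rabs h * Rabs h)) = K * Rabs h)%Re by field; lra.
have e2 : (eps = (K + 1) * (eps / (K + 1)))%Re by field; lra.
rewrite e2; nra.
Qed.

Lemma cid_xi (s t : cplx) (x y h : R) :
  - (RtoC (x + h) * s + RtoC y * t) = - (RtoC x * s + RtoC y * t) + RtoC h * (- s).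
Proof. case: s => ? ?; case: t => ? ?; apply: cplx_ext => /=; ring. Qed.

Lemma qdM_Xi M (S : 'M[cplx]_M) x y : S \in unitmx ->
  qdM (fun h => Xi S (x + h)%Re y) ((- S) *m Xi S x y).
Proof.
move=> hS.
set B := - (RtoC x *: S + RtoC y *: invmx S).
set C := - S.
have hBC : C *m B = B *m C.
  rewrite /B /C mulNmx mulmxN mulmxN mulNmx; congr (- - _).
  rewrite mulmxDr mulmxDl -!scalemxAr -!scalemxAl mulmxV // mulVmx //.
have [b [hb hB]] := bnd_exists B.
have [c [hc hC]] := bnd_exists C.
have eX : forall h, Xi S (x + h)%Re y = mexp (B + RtoC h *: C).
  move=> h; rewrite /Xi; congr mexp; apply/matrixP => i j; rewrite !mxE.
  exact: cid_xi.
move=> i j.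
exists (exp (4 * (INR M * (b + c) + 1))), 1%Re; split; first lra.
split; first by left; exact: exp_pos.
move=> h hh.
have hh' : (Rabs h <= 1)%Re by lra.
have := mexp_deriv hBC hb hc hB hC hh' i j.
rewrite !mxE Rplus_0_r eX Rmult_comm.
by [].
Qed.

Lemma tr11 (W : 'M[cplx]_1) : W ord0 ord0 = \tr W.
Proof. by rewrite /mxtrace big_ord1. Qed.

Section Tr.
Variables (M : nat) (S K Xi0 Y : 'M[cplx]_M) (U : 'M[cplx]_(1, M)) (V : 'M[cplx]_(M, 1)).
Hypotheses (hSX : S *m Xi0 = Xi0 *m S) (hPY : Y *m (K *m Xi0) = K *m Xi0 *m Y)
  (hK : S *m K + K *m S = V *m U).

Lemma tr_q : (U *m Xi0 *m Y *m V) ord0 ord0 = 2%:R * \tr (S *m K *m Xi0 *m Y).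
Proof.
rewrite tr11 mxtrace_mulC !mulmxA -hK !mulmxDl mxtraceD.
have e2 : K *m S *m Xi0 *m Y = (K *m Xi0) *m (S *m Y) by rewrite -(mulmxA K S) hSX !mulmxA.
rewrite e2 (mxtrace_mulC (K *m Xi0)) -(mulmxA S Y) hPY !mulmxA.
by rewrite mulr_natl mulr2n.
Qed.

Lemma f2_lem : K *m Xi0 *m (K *m Xi0) *m Y = Y *m (K *m Xi0 *m (K *m Xi0)).
Proof.
rewrite -(mulmxA (K *m Xi0) (K *m Xi0) Y) -hPY.
by rewrite mulmxA -hPY -mulmxA.
Qed.

Lemma tr_p : \tr ((- (K *m Xi0 *m S *m (K *m Xi0)) - K *m Xi0 *m (K *m Xi0 *m S)) *m Y)
   = - (U *m Xi0 *m K *m Xi0 *m Y *m V) ord0 ord0.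
Proof.
have f1 : \tr (S *m K *m Xi0 *m K *m Xi0 *m Y) = \tr (K *m Xi0 *m (K *m Xi0) *m S *m Y).
  have -> : S *m K *m Xi0 *m K *m Xi0 *m Y = S *m (K *m Xi0 *m (K *m Xi0) *m Y) by rewrite !mulmxA.
  rewrite (mxtrace_mulC S) f2_lem -(mulmxA Y) (mxtrace_mulC Y).
  by [].
have f3 : \tr (K *m S *m Xi0 *m K *m Xi0 *m Y) = \tr (K *m Xi0 *m S *m (K *m Xi0) *m Y).
  by rewrite -(mulmxA K S Xi0) hSX !mulmxA.
rewrite !mulmxA in f1 f3.
rewrite tr11 (mxtrace_mulC _ V) !mulmxA -hK !mulmxDl !mxtraceD !mulNmx !raddfN opprD addrC.
by rewrite f1 f3.
Qed.
End Tr.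

Lemma cl1 (a c d : cplx) : d != 0 -> a * c = d * (a * (d^-1 * c)).
Proof. by move=> hd; rewrite mulrCA (mulrA d) mulfV // mul1r. Qed.

Lemma comm_inv n (A P : 'M[cplx]_n) : A \in unitmx -> P *m A = A *m P ->
  invmx A *m P = P *m invmx A.
Proof.
move=> hU hPA.
rewrite -[invmx A *m P]mulmx1 -(mulmxV hU) !mulmxA -[invmx A *m P *m A]mulmxA hPA.
by rewrite !mulmxA (mulVmx hU) mul1mx.
Qed.

Theorem mainTheorem6 (M : nat) (S K : 'M[cplx]_M) (U : 'M[cplx]_(1, M))
  (V : 'M[cplx]_(M, 1)) (p0 : cplx) :
  S \in unitmx ->
  S *m K + K *m S = V *m U ->
  forall x y : Rdefinitions.R, Dfun S K x y != 0 ->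
    (exists Dx : cplx, has_pderiv_x (Dfun S K) x y Dx /\
       pfun S K U V p0 x y = p0 + Dx / Dfun S K x y) /\
    qfun S K U V x y = 2%:R * \tr (S *m K *m Xi S x y *m invmx (Amat S K x y)).
Proof.
move=> hS hK x y hD.
have HA := qdM_add (qdM_const (1%:M : 'M[cplx]_M))
  (qdM_mul (qdM_mul (qdM_const K) (qdM_Xi x y hS)) (qdM_mul (qdM_const K) (qdM_Xi x y hS))).
have HD := qd_det HA.
have pd := qd_pderiv (g := Dfun S K) HD.
rewrite /= Rplus_0_r in pd.
rewrite /pfun /qfun /Dfun in pd hD *.
set Xi0 := Xi S x y in pd hD *.
set P := K *m Xi0 in pd hD *.
set A0 := Amat S K x y in pd hD *.
have hA0 : A0 = 1%:M + P *m P by [].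
have hU : A0 \in unitmx by rewrite unitmxE unitfE.
set Y := invmx A0.
have hSX : S *m Xi0 = Xi0 *m S.
  apply: mexp_comm.
  rewrite mulmxN mulNmx; congr (- _).
  rewrite mulmxDr mulmxDl -!scalemxAr -!scalemxAl mulmxV // mulVmx //.
have hPA : P *m A0 = A0 *m P.
  by rewrite hA0 mulmxDr mulmxDl mulmx1 mul1mx !mulmxA.
have hPY : Y *m P = P *m Y.
  exact: comm_inv.
have hA1 : 0 + ((0 *m Xi0 + K *m (- S *m Xi0)) *m P + P *m (0 *m Xi0 + K *m (- S *m Xi0)))
    = - (P *m S *m P) - P *m (P *m S).
  rewrite !mul0mx !add0r !mulNmx !mulmxN hSX (mulmxA K Xi0 S) ?mulNmx ?mulmxN. done.
rewrite hA1 -hA0 in pd.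
split; last exact: tr_q.
exists (\sum_(j < M) \sum_(k < M) (- (P *m S *m P) - P *m (P *m S)) j k * cofactor A0 j k).
split; first exact: pd.
have hd : forall A1 : 'M[cplx]_M, \sum_(j < M) \sum_(k < M) A1 j k * cofactor A0 j k
    = \det A0 * \tr (A1 *m Y).
  move=> A1; rewrite /Y /invmx hU /mxtrace mulr_sumr; apply: eq_bigr => j _; rewrite mxE mulr_sumr.
  apply: eq_bigr => k _; rewrite !mxE.
  exact: cl1.
rewrite hd (mulrC (\det A0)) mulfK //.
rewrite (tr_p hSX hPY hK).
by [].
Qed.
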